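(* Let $K$ be a finite simplicial complex, let $f\colon K\to\mathbb{R}$ be an injective filtration function, let $\sigma_1,\ldots,\sigma_k$ be $n$-dimensional simplices of $K$, and let $\pi\in S_k$ be an arbitrary permutation of $\{1,\ldots,k\}$. Assume that for some $\varepsilon>0$ we have $$f(\sigma_1)<f(\sigma_2)<\cdots<f(\sigma_k)<f(\sigma_1)+2\varepsilon.$$ Then there exists an injective filtration function $g$ on $K$ such that $\|f-g\|_\infty\le\varepsilon$ and $$g(\sigma_{\pi(1)})<g(\sigma_{\pi(2)})<\cdots<g(\sigma_{\pi(k)}).$$
   Context: A filtration function on a finite simplicial complex $K$ is a map $f\colon K\to\mathbb{R}$ such that $f(\sigma)\le f(\tau)$ whenever $\sigma$ is a face of $\tau$. For two functions $f,g\colon K\to\mathbb{R}$, $\|f-g\|_\infty=\max_{\sigma\in K}|f(\sigma)-g(\sigma)|$. *)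

(* Defs.v *)
From mathcomp Require Import all_boot all_order all_algebra all_fingroup.
From mathcomp Require Import reals.
Set Implicit Arguments. Unset Strict Implicit. Unset Printing Implicit Defensive.
Import Order.TTheory GRing.Theory Num.Theory.
Local Open Scope ring_scope.

Definition simplicial_complex (V : finType) (K : {set {set V}}) : Prop :=
  (forall s, s \in K -> s != set0) /\
  (forall s t : {set V}, s \in K -> t \subset s -> t != set0 -> t \in K).

Definition sdim (V : finType) (s : {set V}) : nat := #|s|.-1.

(* f : K -> R, represented as a function on vertex sets (values outside K
   are irrelevant). *)
Definition filtration (R : realType) (V : finType) (K : {set {set V}})
  (f : {set V} -> R) : Prop :=
  forall s t : {set V}, s \in K -> t \in K -> s \subset t -> f s <= f t.

Definition injective_on_K (R : realType) (V : finType) (K : {set {set V}})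
  (f : {set V} -> R) : Prop :=
  forall s t : {set V}, s \in K -> t \in K -> f s = f t -> s = t.

Definition sup_dist_le (R : realType) (V : finType) (K : {set {set V}})
  (f g : {set V} -> R) (e : R) : Prop :=
  forall s, s \in K -> `|f s - g s| <= e.

(* Main.v *)
Require Import Defs.
From mathcomp Require Import all_boot all_order all_algebra all_fingroup.
From mathcomp Require Import reals lra.
Import Order.TTheory GRing.Theory Num.Theory.
Set Implicit Arguments. Unset Strict Implicit.
Local Open Scope ring_scope.
Definition psiL {R : realType} (a b t x : R) := if (a <= x <= b) then a + t*(x-a) else x.
Definition psiH {R : realType} (a b t x : R) := if (a <= x <= b) then b - t*(b-x) else x.

Ltac cases a b x := rewrite ?/psiL ?/psiH; case: (lerP a x); case: (lerP x b) => /=; intros.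

Definition Hyps {R : realType} (a b t : R) := [/\ a <= b, 0 <= t, 2 * t <= 1 & (a < b -> 0 < t)].
Ltac hy H := destruct H as [Hab Ht0 Ht1 Htp].

Lemma psiL_mono (R : realType) (a b t x y : R) : Hyps a b t -> x <= y -> psiL a b t x <= psiL a b t y.
Proof. move=> H xy; hy H; cases a b x; cases a b y; nra. Qed.
Lemma psiH_mono (R : realType) (a b t x y : R) : Hyps a b t -> x <= y -> psiH a b t x <= psiH a b t y.
Proof. move=> H xy; hy H; cases a b x; cases a b y; nra. Qed.
Lemma psiL_le (R : realType) (a b t x : R) : Hyps a b t -> psiL a b t x <= x.
Proof. move=> H; hy H; cases a b x; nra. Qed.
Lemma psiH_ge (R : realType) (a b t x : R) : Hyps a b t -> x <= psiH a b t x.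
Proof. move=> H; hy H; cases a b x; nra. Qed.
Lemma psiL_dist (R : realType) (a b t x e : R) : Hyps a b t -> (1 - t) * (b - a) <= e -> 0 <= e -> `|x - psiL a b t x| <= e.
Proof. move=> H he e0; hy H; cases a b x; rewrite ler_norml; apply/andP; split; nra. Qed.
Lemma psiH_dist (R : realType) (a b t x e : R) : Hyps a b t -> (1 - t) * (b - a) <= e -> 0 <= e -> `|x - psiH a b t x| <= e.
Proof. move=> H he e0; hy H; cases a b x; rewrite ler_norml; apply/andP; split; nra. Qed.
Lemma psiL_upL (R : realType) (a b t x : R) : Hyps a b t -> x <= b -> psiL a b t x <= a + t * (b - a).
Proof. move=> H xb; hy H; cases a b x; nra. Qed.
Lemma psiH_loH (R : realType) (a b t x : R) : Hyps a b t -> a <= x -> b - t * (b - a) <= psiH a b t x.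
Proof. move=> H xb; hy H; cases a b x; nra. Qed.

Lemma neqlt (R : realType) (x y : R) : x != y -> x < y \/ y < x.
Proof. case: (ltgtP x y) => h //; by [left|right]. Qed.

Lemma psiL_cls (R : realType) (a b t x : R) : Hyps a b t -> x != a -> x != b ->
  (psiL a b t x = x /\ (x < a \/ b < x)) \/
  [/\ a < x < b, 0 < t, psiL a b t x = a + t * (x - a) & a < psiL a b t x < a + t * (b - a)].
Proof.
move=> H /neqlt xa /neqlt xb; hy H; cases a b x.
- right; have ha : a < x by case: xa => h; lra.
  have hb : x < b by case: xb => h; lra.
  have t0 : 0 < t by apply: Htp; lra.
  split=> //; first (apply/andP; split=> //). apply/andP; split; nra.
all: left; split=> //; case: xa; case: xb; intros; lra.
Qed.
Lemma psiH_cls (R : realType) (a b t x : R) : Hyps a b t -> x != a -> x != b ->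
  (psiH a b t x = x /\ (x < a \/ b < x)) \/
  [/\ a < x < b, 0 < t, psiH a b t x = b - t * (b - x) & b - t * (b - a) < psiH a b t x < b].
Proof.
move=> H /neqlt xa /neqlt xb; hy H; cases a b x.
- right; have ha : a < x by case: xa => h; lra.
  have hb : x < b by case: xb => h; lra.
  have t0 : 0 < t by apply: Htp; lra.
  split=> //; first (apply/andP; split=> //). apply/andP; split; nra.
all: left; split=> //; case: xa; case: xb; intros; lra.
Qed.
Lemma Hyps_facts (R : realType) (a b t : R) : Hyps a b t ->
  a + t * (b - a) <= b - t * (b - a) /\ 0 <= t * (b - a).
Proof. move=> H; hy H; split; nra. Qed.

Lemma psiL_inj (R : realType) (a b t x y : R) : Hyps a b t -> x != a -> x != b -> y != a -> y != b ->
  psiL a b t x = psiL a b t y -> x = y.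
Proof.
move=> H xa xb ya yb E; have [F1 F2] := Hyps_facts H.
case: (psiL_cls H xa xb) => [[Ex hx]|[/andP[hx1 hx2] t0 Ex rx]];
case: (psiL_cls H ya yb) => [[Ey hy]|[/andP[hy1 hy2] _ Ey ry]].
- by rewrite -Ex -Ey.
- move/andP: ry => [] *; rewrite E in Ex; case: hx; lra.
- move/andP: rx => [] *; rewrite -E in Ey; case: hy; lra.
- apply: (mulfI (lt0r_neq0 t0)); lra.
Qed.
Lemma psiH_inj (R : realType) (a b t x y : R) : Hyps a b t -> x != a -> x != b -> y != a -> y != b ->
  psiH a b t x = psiH a b t y -> x = y.
Proof.
move=> H xa xb ya yb E; have [F1 F2] := Hyps_facts H.
case: (psiH_cls H xa xb) => [[Ex hx]|[/andP[hx1 hx2] t0 Ex rx]];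
case: (psiH_cls H ya yb) => [[Ey hy]|[/andP[hy1 hy2] _ Ey ry]].
- by rewrite -Ex -Ey.
- move/andP: ry => [] *; rewrite E in Ex; case: hx; lra.
- move/andP: rx => [] *; rewrite -E in Ey; case: hy; lra.
- apply: (mulfI (lt0r_neq0 t0)); lra.
Qed.
Lemma psiLH_inj (R : realType) (a b t x y : R) : Hyps a b t -> x != a -> x != b -> y != a -> y != b ->
  psiL a b t x = psiH a b t y -> x = y.
Proof.
move=> H xa xb ya yb E; have [F1 F2] := Hyps_facts H.
case: (psiL_cls H xa xb) => [[Ex hx]|[/andP[hx1 hx2] t0 Ex rx]];
case: (psiH_cls H ya yb) => [[Ey hy]|[/andP[hy1 hy2] _ Ey ry]].
- by rewrite -Ex -Ey.
- move/andP: ry => [] *; rewrite E in Ex; case: hx; lra.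
- move/andP: rx => [] *; rewrite -E in Ey; case: hy; lra.
- move/andP: rx => [] *; move/andP: ry => [] *; lra.
Qed.
Lemma psiL_band (R : realType) (a b t x p : R) : Hyps a b t -> x != a -> x != b ->
  a + t * (b - a) <= p -> p <= b - t * (b - a) -> psiL a b t x != p.
Proof.
move=> H xa xb hp hp'; apply/eqP=> E; have [F1 F2] := Hyps_facts H.
case: (psiL_cls H xa xb) => [[Ex hx]|[_ _ _ /andP[] *]]; last lra.
case: hx; lra.
Qed.
Lemma psiH_band (R : realType) (a b t x p : R) : Hyps a b t -> x != a -> x != b ->
  a + t * (b - a) <= p -> p <= b - t * (b - a) -> psiH a b t x != p.
Proof.
move=> H xa xb hp hp'; apply/eqP=> E; have [F1 F2] := Hyps_facts H.
case: (psiH_cls H xa xb) => [[Ex hx]|[_ _ _ /andP[] *]]; last lra.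
case: hx; lra.
Qed.

Lemma qbounds (R : realType) (m N : nat) : (m <= N)%N -> (0 < N)%N -> 0 <= (m%:R / N%:R : R) <= 1.
Proof.
move=> mN N0; have N0' : (0 : R) < N%:R by rewrite ltr0n.
apply/andP; split; first by rewrite divr_ge0 // ler0n.
by rewrite ler_pdivrMr // mul1r ler_nat.
Qed.
Lemma qmono (R : realType) (m m' N : nat) : (m < m')%N -> (0 < N)%N -> (m%:R / N%:R : R) < m'%:R / N%:R.
Proof.
move=> mm N0; have N0' : (0 : R) < (N%:R)^-1 by rewrite invr_gt0 ltr0n.
by rewrite ltr_pM2r // ltr_nat.
Qed.

Lemma interp (R : realType) (L H q : R) : L <= H -> 0 <= q <= 1 -> L <= L + (H - L) * q <= H.
Proof. move=> h /andP[q0 q1]; apply/andP; split; nra. Qed.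
Lemma interp_lt (R : realType) (L H q q' : R) : L < H -> q < q' -> L + (H - L) * q < L + (H - L) * q'.
Proof. move=> h qq; nra. Qed.

Theorem corollary2p2 (R : realType) (V : finType) (K : {set {set V}})
  (f : {set V} -> R) (n k : nat) (sigma : 'I_k -> {set V}) (pi : 'S_k)
  (eps : R) :
  simplicial_complex K ->
  filtration K f -> injective_on_K K f ->
  (forall i, sigma i \in K) ->
  (forall i, sdim (sigma i) = n) ->
  0 < eps ->
  (forall i j : 'I_k, (i < j)%N -> f (sigma i) < f (sigma j)) ->
  (forall i j : 'I_k, nat_of_ord i = 0%N -> nat_of_ord j = k.-1 ->
     f (sigma j) < f (sigma i) + 2 * eps) ->
  exists g : {set V} -> R,
    [/\ filtration K g, injective_on_K K g, sup_dist_le K f g eps &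
        forall i j : 'I_k, (i < j)%N -> g (sigma (pi i)) < g (sigma (pi j))].
Proof.
move=> [Kne Kcl] Hf Hinj HsK Hdim e0 Hlt Hlast.
case: k sigma pi Hlt Hlast HsK Hdim => [|k'] sigma pi Hlt Hlast HsK Hdim.
  exists f; split => //; last by case.
  by move=> s _; rewrite subrr normr0 ltW.
set a := f (sigma ord0); set b := f (sigma ord_max).
have Hrange i : a <= f (sigma i) <= b.
  apply/andP; split.
    case: (posnP i) => [i0|ip]; last exact/ltW/Hlt.
    by rewrite /a; have -> : i = ord0 by apply: val_inj.
  have : (i <= k')%N by rewrite -ltnS.
  rewrite leq_eqVlt => /orP[/eqP ik|ik]; last exact/ltW/Hlt.
  by rewrite /b; have -> : i = ord_max by apply: val_inj.
have Hw : b - a < 2 * eps by have := Hlast ord0 ord_max erefl erefl; rewrite /a /b; lra.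
have Hab : a <= b by have /andP[] := Hrange ord0.
have Habk : (0 < k')%N -> a < b by move=> kp; apply: Hlt.
set t := (b - a) / (4 * eps).
have Ht : t * (4 * eps) = b - a by rewrite /t divfK // mulf_neq0 // ?lt0r_neq0.
have HH : Hyps a b t.
  split => //.
  - by rewrite /t divr_ge0 ?subr_ge0 // mulr_ge0 // ltW.
  - nra.
  - move=> ab; rewrite /t divr_gt0 ?subr_gt0 // mulr_gt0 //.
have Hd : (1 - t) * (b - a) <= eps by rewrite -Ht; nra.
have [F1 F2] := Hyps_facts HH.
set L := a + t * (b - a); set H := b - t * (b - a).
have LH : a < b -> L < H by move=> ab; rewrite /L /H; nra.
pose p (j : 'I_k'.+1) := L + (H - L) * ((j.+1)%:R / (k'.+2)%:R).
have pr (j : 'I_k'.+1) : L <= p j <= H.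
  exact: interp F1 (@qbounds R j.+1 k'.+2 (leqW (ltn_ord j)) isT).
have pmono (j j' : 'I_k'.+1) : (j < j')%N -> p j < p j'.
  move=> jj; have kp : (0 < k')%N by apply: leq_trans (leq_ltn_trans (leq0n j) jj) _; rewrite -ltnS.
  exact: interp_lt (LH (Habk kp)) (@qmono R j.+1 j'.+1 k'.+2 jj isT).
have pinj (j j' : 'I_k'.+1) : p j = p j' -> j = j'.
  move=> E; case: (ltngtP j j') => [h|h|h]; last exact: val_inj.
  - by have := pmono _ _ h; rewrite E ltxx.
  - by have := pmono _ _ h; rewrite E ltxx.
have sinj (i j : 'I_k'.+1) : sigma i = sigma j -> i = j.
  move=> E; case: (ltngtP i j) => [h|h|h]; last exact: val_inj.
  - by have := Hlt _ _ h; rewrite E ltxx.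
  - by have := Hlt _ _ h; rewrite E ltxx.
have card_s i : #|sigma i| = n.+1.
  have := Hdim i; rewrite /sdim; have := Kne _ (HsK i); rewrite -card_gt0.
  by case: #|_| => // m _ /= ->.
pose g (s : {set V}) := match [pick i | s == sigma i] with
  | Some i => p (pi^-1 i)%g
  | None => if (#|s| <= n)%N then psiL a b t (f s) else psiH a b t (f s) end.
have gS i : g (sigma i) = p (pi^-1 i)%g.
  rewrite /g; case: pickP => [j /eqP /sinj -> // | /(_ i)]; by rewrite eqxx.
have gN s : (forall i, s != sigma i) -> g s = if (#|s| <= n)%N then psiL a b t (f s) else psiH a b t (f s).
  by move=> Ns; rewrite /g; case: pickP => [j /eqP E|] //; have := Ns j; rewrite E eqxx.
have cls s : (exists i, s = sigma i) \/ (forall i, s != sigma i).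
  case: (pickP (fun i => s == sigma i)) => [i /eqP E|N]; [left; by exists i | right=> i; by rewrite N].
have fna s : s \in K -> (forall i, s != sigma i) -> f s != a /\ f s != b.
  move=> sK Ns; split; apply/eqP => E.
  - by have := Ns ord0; rewrite (Hinj _ _ sK (HsK _) E) eqxx.
  - by have := Ns ord_max; rewrite (Hinj _ _ sK (HsK _) E) eqxx.
exists g; split.
- move=> s s' hs hs' sub.
  case: (cls s) => [[i Ei]|Ns]; case: (cls s') => [[j Ej]|Ns']; subst.
  + by have /eqP -> : sigma i == sigma j by rewrite eqEcard sub !card_s leqnn.
  + rewrite gS gN //.
    have hc : (#|s'| <= n)%N = false.
      have h := subset_leq_card sub; rewrite card_s in h.
      by apply/negbTE; rewrite -ltnNge.
    rewrite hc; have /andP[_ pH] := pr (pi^-1 i)%g.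
    apply: le_trans pH (psiH_loH HH _).
    have /andP[h1 _] := Hrange i.
    exact: le_trans h1 (Hf _ _ (HsK i) hs' sub).
  + rewrite gS gN //.
    have hc : (#|s| <= n)%N.
      have h := subset_leq_card sub; rewrite card_s leq_eqVlt in h.
      case/orP: h => [/eqP e|]; last by rewrite ltnS.
      by case/negP: (Ns j); rewrite eqEcard sub card_s e leqnn.
    rewrite hc; have /andP[pL _] := pr (pi^-1 j)%g.
    apply: le_trans (psiL_upL HH _) pL.
    have /andP[_ h2] := Hrange j.
    exact: le_trans (Hf _ _ hs (HsK j) sub) h2.
  + rewrite !gN //; have fs := Hf _ _ hs hs' sub.
    case: (boolP (#|s'| <= n)%N) => c'; case: (boolP (#|s| <= n)%N) => c.
    * exact: psiL_mono.
    * by move: c; rewrite (leq_trans (subset_leq_card sub) c').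
    * apply: (le_trans (psiL_le (f s) HH)); exact: le_trans fs (psiH_ge (f s') HH).
    * exact: psiH_mono.
- move=> s s' hs hs' E.
  case: (cls s) => [[i Ei]|Ns]; case: (cls s') => [[j Ej]|Ns']; subst.
  + rewrite !gS in E; have := pinj _ _ E; move/(congr1 pi); by rewrite !permKV => ->.
  + rewrite gS gN // in E; have [fa fb] := fna _ hs' Ns'.
    have /andP[p1 p2] := pr (pi^-1 i)%g.
    case: ifP E => _ E.
    * by move: (psiL_band HH fa fb p1 p2); rewrite -E eqxx.
    * by move: (psiH_band HH fa fb p1 p2); rewrite -E eqxx.
  + rewrite gS gN // in E; have [fa fb] := fna _ hs Ns.
    have /andP[p1 p2] := pr (pi^-1 j)%g.
    case: ifP E => _ E.
    * by move: (psiL_band HH fa fb p1 p2); rewrite E eqxx.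
    * by move: (psiH_band HH fa fb p1 p2); rewrite E eqxx.
  + rewrite !gN // in E; have [fa fb] := fna _ hs Ns; have [fa' fb'] := fna _ hs' Ns'.
    apply: Hinj => //.
    case: ifP E => _; case: ifP => _ E.
    * exact: psiL_inj HH fa fb fa' fb' E.
    * exact: psiLH_inj HH fa fb fa' fb' E.
    * exact: esym (psiLH_inj HH fa' fb' fa fb (esym E)).
    * exact: psiH_inj HH fa fb fa' fb' E.
- move=> s hs; case: (cls s) => [[i Ei]|Ns]; subst.
  + rewrite gS; have /andP[h1 h2] := Hrange i; have /andP[p1 p2] := pr (pi^-1 i)%g.
    rewrite /L /H in p1 p2; rewrite ler_norml; apply/andP; split; lra.
  + rewrite gN //; case: ifP => _; [exact: psiL_dist HH Hd (ltW e0) | exact: psiH_dist HH Hd (ltW e0)].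
- move=> i j ij; rewrite !gS !permK; exact: pmono.
Qed.
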